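(* Let $e\to H\to G\xrightarrow{q} K\to e$ be a short exact sequence of groups with $H\subset FCH(G)$ (i.e. $G$ is an FC-hypercentral extension of $K$). Then $G$ is FC-hypercentral if and only if $K$ is FC-hypercentral.
   Context: The FC-center $FC(G)$ is the subgroup of elements of $G$ with finite conjugacy class. The upper FC-central series $(F_\alpha)_\alpha$, indexed by ordinals, is defined by $F_0=\{e\}$, $F_{\beta+1}/F_\beta=FC(G/F_\beta)$, and $F_\alpha=\bigcup_{\beta<\alpha}F_\beta$ for limit ordinals $\alpha$. The FC-hypercenter is $FCH(G)=\bigcup_\alpha F_\alpha$, and $G$ is FC-hypercentral if $FCH(G)=G$. *)

(* Defs.v *)
From mathcomp Require Import all_boot.
From mathcomp Require Export monoid.

Set Implicit Arguments.
Unset Strict Implicit.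
Unset Printing Implicit Defensive.

Local Open Scope group_scope.

(* [FCmod S g]: for S a normal subgroup of G, this says that the coset gS has
   finitely many conjugates in G/S, i.e. gS lies in FC(G/S). *)
Definition FCmod (G : groupType) (S : G -> Prop) (g : G) : Prop :=
  exists s : seq G, forall y : G, exists2 z, z \in s & S (g ^ y / z).

(* The FC-hypercenter FCH(G): union of the upper FC-central series
   F_0 = {e}, F_(b+1) = preimage of FC(G/F_b), F_a = union_(b<a) F_b.
   It is defined here as the least subset of G containing e and closed under
   the step operator S |-> FCmod S (monotone and inflationary on normal
   subgroups), which is exactly the union of its transfinite iterates
   starting from {e}. *)
Definition FCH (G : groupType) (g : G) : Prop :=
  forall S : G -> Prop, S 1 -> (forall x, FCmod S x -> S x) -> S g.

Definition FC_hypercentral (G : groupType) : Prop := forall g : G, FCH g.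

(* Main.v *)
Require Import Defs.
From mathcomp Require Import all_boot.
From mathcomp Require Import monoid.

Local Open Scope group_scope.

Section Morph.
Variables (G K : groupType) (q : G -> K) (q_morph : {morph q : x y / x * y}).

Lemma qm1 : q 1 = 1.
Proof.
have h : q 1 * q 1 = q 1 * 1 by rewrite -q_morph !mulg1.
exact: (mulgI _ _ _ h).
Qed.

Lemma qmV x : q x^-1 = (q x)^-1.
Proof.
apply: (mulgI (q x)); rewrite -q_morph !mulgV; exact: qm1.
Qed.

Lemma qmJ x y : q (x ^ y) = (q x) ^ (q y).
Proof. by rewrite !conjgE !q_morph qmV. Qed.

Lemma qmD x y : q (x / y) = q x / q y.
Proof. by rewrite q_morph qmV. Qed.

Lemma lift_seq (q_surj : forall k : K, exists g : G, q g = k) (s : seq K) :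
  exists t : seq G, map q t = s.
Proof.
elim: s => [|k s [t Ht]]; first by exists [::].
have [g Hg] := q_surj k; exists (g :: t); by rewrite /= Hg Ht.
Qed.
End Morph.

Theorem proposition2p7 (H G K : groupType) (i : H -> G) (q : G -> K)
  (i_morph : {morph i : x y / x * y}) (q_morph : {morph q : x y / x * y})
  (i_inj : injective i) (q_surj : forall k : K, exists g : G, q g = k)
  (exact_mid : forall g : G, q g = 1 <-> exists h : H, i h = g)
  (H_in_FCH : forall h : H, FCH (i h)) :
  FC_hypercentral G <-> FC_hypercentral K.
Proof.
split.
- move=> hG k T T1 Tcl.
  have [g <-] := q_surj k.
  apply: (hG g (fun g => T (q g))); first by rewrite qm1.
  move=> x [s Hs]; apply: Tcl; exists (map q s) => y'.
  have [y <-] := q_surj y'.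
  have [z zs Tz] := Hs y; exists (q z); first exact: map_f.
  by rewrite qmD // qmJ in Tz.
- move=> hK g T T1 Tcl.
  have HT : forall h, T (i h) by move=> h; exact: H_in_FCH.
  apply: (hK (q g) (fun k => forall g, q g = k -> T g) _ _ g erefl).
  + by move=> g' /exact_mid [h <-].
  + move=> k [s Hs] g' qg'; apply: Tcl.
    have [t Ht] := @lift_seq G K q q_surj s.
    exists t => y.
    have [z zs Sz] := Hs (q y).
    rewrite -Ht in zs; have /mapP [z' z't ez] := zs.
    exists z' => //; apply: Sz; rewrite ez.
    by rewrite qmD // qmJ // qg'.
Qed.
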